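(* Let $(V,e)$ be a unital $\ast$-normed space which is a function system, i.e. $\operatorname{ball}V=S^\circ$ where $S=V_{he}^\ast\cap\operatorname{ball}V^\ast$. Let $\mathfrak{c}=\{v\in V_h:\langle v,\varphi\rangle\ge0\ \forall\varphi\in S\}$ and $\|v\|_e=\sup\{|\langle v,\varphi\rangle|:\varphi\in S\}$. Then $\mathfrak{c}$ is a separated, closed, unital cone in $V$ with $S(\mathfrak{c})=S$, and $\|\cdot\|=\|\cdot\|_e$. In particular $\|e\|=1$.
   Context: A $\ast$-normed space is a complex vector space with involution and norm satisfying $\|v^\ast\|=\|v\|$; $V_h$ are the hermitian elements; $V^\ast$ has involution $\langle v,\varphi^\ast\rangle=\overline{\langle v^\ast,\varphi\rangle}$, $V_h^\ast$ its hermitian bounded functionals, and for nonzero $e\in V_h$, $V_{he}^\ast=\{y\in V_h^\ast:\langle e,y\rangle=1\}$. $(V,e)$ is unital if $V_{he}^\ast\cap\operatorname{ball}V^\ast\neq\varnothing$. $S^\circ=\{v\in V:|\langle v,\varphi\rangle|\le1\ \forall\varphi\in S\}$. A cone $\mathfrak{c}\subseteq V_h$ is separated if $\mathfrak{c}\cap-\mathfrak{c}=\{0\}$, unital if for every $v\in V_h$ some $v+re$ ($r\ge0$) lies in $\mathfrak{c}$; $S(\mathfrak{c})$ is the set of linear functionals $\varphi$ on $V$ with $\varphi(\mathfrak{c})\ge0$, $\varphi(e)=1$. *)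

(* Defs.v *)
From mathcomp Require Import all_boot all_order all_algebra.
From mathcomp Require Import all_classical all_reals all_analysis.
From mathcomp Require Export complex.
Set Implicit Arguments. Unset Strict Implicit. Unset Printing Implicit Defensive.
Import Order.TTheory GRing.Theory Num.Theory.
Local Open Scope ring_scope.
Local Open Scope classical_set_scope.

Section StarNormed.
Variables (R : realType) (V : normedModType R[i]).

Definition star_normed (star : V -> V) : Prop :=
  [/\ forall u v, star (u + v) = star u + star v,
      forall (a : R[i]) v, star (a *: v) = (a^*)%C *: star v,
      forall v, star (star v) = v &
      forall v, `|star v| = `|v| ].

Definition hermitian_elts (star : V -> V) : set V := [set v | star v = v].

Definition lin_functional (phi : V -> R[i]) : Prop :=
  forall (a : R[i]) u v, phi (a *: u + v) = a * phi u + phi v.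

Definition bounded_functional (phi : V -> R[i]) : Prop :=
  lin_functional phi /\ exists M : R[i], forall v, `|phi v| <= M * `|v|.

Definition dual_ball : set (V -> R[i]) :=
  [set phi | bounded_functional phi /\ forall v, `|phi v| <= `|v|].

(* hermitian functionals: phi^* = phi, where <v, phi^*> = conj <v^*, phi> *)
Definition hermitian_functional (star : V -> V) (phi : V -> R[i]) : Prop :=
  forall v, phi v = ((phi (star v))^*)%C.

Definition Vhe_dual (star : V -> V) (e : V) : set (V -> R[i]) :=
  [set phi | bounded_functional phi /\ hermitian_functional star phi /\ phi e = 1].

Definition state_set (star : V -> V) (e : V) : set (V -> R[i]) :=
  Vhe_dual star e `&` dual_ball.

Definition unital_space (star : V -> V) (e : V) : Prop :=
  state_set star e !=set0.

Definition polar (S : set (V -> R[i])) : set V :=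
  [set v | forall phi, S phi -> `|phi v| <= 1].

Definition unit_ball : set V := [set v | `|v| <= 1].

Definition is_cone (star : V -> V) (c : set V) : Prop :=
  [/\ c `<=` hermitian_elts star, c 0,
      forall u v, c u -> c v -> c (u + v) &
      forall (r : R[i]) v, 0 <= r -> c v -> c (r *: v)].

Definition separated_cone (c : set V) : Prop := c `&` [set - v | v in c] = [set 0].

Definition unital_cone (star : V -> V) (e : V) (c : set V) : Prop :=
  forall v, hermitian_elts star v -> exists r : R[i], 0 <= r /\ c (v + r *: e).

Definition states_of_cone (e : V) (c : set V) : set (V -> R[i]) :=
  [set phi | lin_functional phi /\ (forall v, c v -> 0 <= phi v) /\ phi e = 1].

Definition e_norm (S : set (V -> R[i])) (v : V) : R :=
  sup [set ComplexField.Normc.normc (phi v) | phi in S].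

End StarNormed.

(* Main.v *)
Require Import Defs.
From mathcomp Require Import all_boot all_order all_algebra.
From mathcomp Require Import all_classical all_reals all_analysis.
From mathcomp Require Import complex.
From mathcomp Require Import ring lra.
Import Order.TTheory GRing.Theory Num.Theory.
Local Open Scope ring_scope.
Local Open Scope classical_set_scope.

Lemma half2 (R : realType) (a : R[i]) : 2^-1 * (a + a) = a.
Proof. by field. Qed.

Lemma half2' (R : realType) (a : R[i]) : a / 2 + a / 2 = a.
Proof. by field. Qed.

Lemma conjE (R : realType) (z : R[i]) : (z^*)%C = z^*.
Proof. by []. Qed.

Lemma lin0 {R : realType} {V : normedModType R[i]} {phi : V -> R[i]} :
  lin_functional phi -> phi 0 = 0.
Proof.
move=> h; have := h 1 0 0; rewrite scale1r addr0 mul1r => E.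
by apply: (addrI (phi 0)); rewrite addr0 -E.
Qed.

Lemma linZ {R : realType} {V : normedModType R[i]} {phi : V -> R[i]} :
  lin_functional phi -> forall a u, phi (a *: u) = a * phi u.
Proof. by move=> h a u; have := h a u 0; rewrite !addr0 (lin0 h) addr0. Qed.

Lemma linD {R : realType} {V : normedModType R[i]} {phi : V -> R[i]} :
  lin_functional phi -> forall u v, phi (u + v) = phi u + phi v.
Proof. by move=> h u v; have := h 1 u v; rewrite scale1r mul1r. Qed.

Lemma linN {R : realType} {V : normedModType R[i]} {phi : V -> R[i]} :
  lin_functional phi -> forall u, phi (- u) = - phi u.
Proof. by move=> h u; rewrite -scaleN1r (linZ h) mulN1r. Qed.

Lemma linB {R : realType} {V : normedModType R[i]} {phi : V -> R[i]} :
  lin_functional phi -> forall u v, phi (u - v) = phi u - phi v.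
Proof. by move=> h u v; rewrite (linD h) (linN h). Qed.

Theorem lemma4p1 (R : realType) (V : normedModType R[i]) (star : V -> V) (e : V)
  (hstar : star_normed star)
  (he_herm : hermitian_elts star e) (he0 : e != 0)
  (hunital : unital_space star e)
  (hfs : @unit_ball R V = polar (state_set star e)) :
  let S := state_set star e in
  let c := [set v | hermitian_elts star v /\ forall phi, S phi -> 0 <= phi v] in
  [/\ is_cone star c, separated_cone c, closed c, unital_cone star e c &
      states_of_cone e c = S] /\
  ((forall v : V, `|v| = (e_norm S v)%:C%C) /\ `|e| = 1).
Proof.
move=> S c.
have [sD sZ sK sN] := hstar.
have sZ' : forall (a : R[i]) v, star (a *: v) = a^* *: star v by [].
have star0 : star 0 = 0.
  by apply: (addrI (star 0)); rewrite -sD !addr0.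
have starN : forall v, star (- v) = - star v.
  by move=> v; apply: (addrI (star v)); rewrite -sD !subrr.
have starB : forall u v, star (u - v) = star u - star v.
  by move=> u v; rewrite sD starN.
have hee : star e = e by [].
have Slin : forall phi, S phi -> lin_functional phi by move=> phi [[[]]].
have Sb : forall phi, S phi -> forall v, `|phi v| <= `|v|.
  by move=> phi [_ [_ ]].
have Sherm : forall phi, S phi -> forall v, phi v = (phi (star v))^*.
  by move=> phi [[_ [hh _]] _] v; rewrite -conjE; apply: hh.
have Se : forall phi, S phi -> phi e = 1 by move=> phi [[_ [_ ]]].
have Sreal : forall phi, S phi -> forall v, star v = v -> phi v \is Num.real.
  move=> phi Sphi v hv; have := Sherm phi Sphi v; rewrite hv => E.
  by rewrite CrealE -E.
have [phi0 Sphi0] := hunital.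
have normC : forall v : V, `|v| = (complex.Re `|v|)%:C%C.
  by move=> v; rewrite RRe_real // normr_real.
have Hball : forall v (r : R), 0 < r ->
    (forall phi, S phi -> `|phi v| <= r%:C%C) -> `|v| <= r%:C%C.
  move=> v r r0 hv.
  have rC0 : 0 < r%:C%C by rewrite ltcR.
  have : unit_ball ((r%:C%C)^-1 *: v).
    rewrite hfs => phi Sphi.
    rewrite (linZ (Slin _ Sphi)) normrM ger0_norm; last by rewrite invr_ge0 ltW.
    rewrite -(mulVf (lt0r_neq0 rC0)); apply: ler_wpM2l; first by rewrite invr_ge0 ltW.
    exact: hv.
  rewrite /unit_ball /= normrZ ger0_norm; last by rewrite invr_ge0 ltW.
  move=> h; rewrite -[`|v|](mulVKf (lt0r_neq0 rC0)) -[X in _ <= X]mulr1.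
  by apply: ler_wpM2l => //; apply: ltW.
have Hzero : forall y, (forall phi, S phi -> phi y = 0) -> y = 0.
  move=> y hy; apply: normr0_eq0.
  have hr : forall r : R, 0 < r -> complex.Re `|y| <= r.
    move=> r r0; rewrite -lecR -normC; apply: Hball => // phi Sphi.
    by rewrite hy // normr0 ler0c ltW.
  have n0 : 0 <= complex.Re `|y| by rewrite -ler0c -normC.
  rewrite normC; congr (_%:C%C).
  case: (ltrgtP (complex.Re `|y|) 0) => // hp; first by lra.
  have := hr _ (divr_gt0 hp (ltr0n _ 2)); lra.
have cplus : forall h, star h = h -> c (h + `|h| *: e).
  move=> h hh; split.
    by rewrite /hermitian_elts /= sD sZ' hh hee conj_Creal // normr_real.
  move=> psi Spsi; rewrite (linD (Slin _ Spsi)) (linZ (Slin _ Spsi)) Se // mulr1.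
  have := Sb psi Spsi h; rewrite real_ler_norml ?Sreal // => /andP[h1 _].
  by rewrite -[`|h|]opprK subr_ge0.
have cminus : forall h, star h = h -> c (`|h| *: e - h).
  move=> h hh; split.
    by rewrite /hermitian_elts /= starB sZ' hh hee conj_Creal // normr_real.
  move=> psi Spsi; rewrite (linB (Slin _ Spsi)) (linZ (Slin _ Spsi)) Se // mulr1.
  rewrite subr_ge0; apply: le_trans (Sb psi Spsi h).
  by apply: real_ler_norm; apply: Sreal.
have normeq : forall v : V, `|v| = (e_norm S v)%:C%C.
  move=> v; rewrite normC; congr (_%:C%C).
  rewrite /e_norm; set A := [set _ | _ in _].
  have Aub : ubound A (complex.Re `|v|).
    move=> x [phi Sphi <-]; rewrite -lecR -normC; exact: Sb.
  have A0 : A !=set0 by exists (ComplexField.Normc.normc (phi0 v)); exists phi0.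
  have hs : has_sup A by split => //; exists (complex.Re `|v|).
  have s_ub := sup_upper_bound hs.
  have s0 : 0 <= sup A.
    apply: le_trans (s_ub _ (ex_intro2 _ _ phi0 Sphi0 erefl)).
    by rewrite -ler0c; exact: (normr_ge0 (phi0 v)).
  apply/eqP; rewrite eq_le ge_sup // andbT.
  case: (lerP (complex.Re `|v|) (sup A)) => // hlt.
  have r0 : 0 < (sup A + complex.Re `|v|) / 2 by lra.
  suff : complex.Re `|v| <= (sup A + complex.Re `|v|) / 2 by lra.
  move: (Hball v _ r0); rewrite [in X in X -> _]normC lecR; apply => phi Sphi.
  have : ComplexField.Normc.normc (phi v) <= sup A.
    by apply: s_ub; exists phi.
  move=> h; have -> : `|phi v| = (ComplexField.Normc.normc (phi v))%:C%C by [].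
  rewrite lecR; lra.
split; last first.
  split => //; apply/eqP; rewrite eq_le; apply/andP; split.
    have : @unit_ball R V e by rewrite hfs => phi Sphi; rewrite Se // normr1.
    by [].
  by have := Sb _ Sphi0 e; rewrite Se // normr1.
split.
- split.
  + by move=> v [].
  + by split; [rewrite /hermitian_elts /= star0 | move=> psi Spsi; rewrite (lin0 (Slin _ Spsi))].
  + move=> u v [hu pu] [hv pv]; split; first by rewrite /hermitian_elts /= sD hu hv.
    by move=> psi Spsi; rewrite (linD (Slin _ Spsi)); apply: addr_ge0; [apply: pu | apply: pv].
  + move=> r v r0 [hv pv]; split.
      by rewrite /hermitian_elts /= sZ' hv conj_Creal // ger0_real.
    by move=> psi Spsi; rewrite (linZ (Slin _ Spsi)); apply: mulr_ge0 => //; apply: pv.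
- apply/seteqP; split => x.
  + move=> [[hx px] [y [hy py] yx]]; rewrite /set1 /=.
    have y0 : y = 0.
      apply: Hzero => phi Sphi; apply/eqP; rewrite eq_le py // andbT.
      by rewrite -oppr_ge0 -(linN (Slin _ Sphi)) yx px.
    by rewrite -yx y0 oppr0.
  + move=> -> /=; have c0 : c 0.
      by split; [rewrite /hermitian_elts /= star0 | move=> psi Spsi; rewrite (lin0 (Slin _ Spsi))].
    by split => //; exists 0 => //; rewrite oppr0.
- move=> v cl.
  have near : forall eps : R[i], 0 < eps -> exists w, c w /\ `|v - w| < eps.
    move=> eps eps0; have [w [cw bw]] := cl _ (nbhsx_ballx v eps eps0).
    by exists w; split => //; move: bw; rewrite -ball_normE.
  have hv : star v = v.
    apply/eqP; rewrite -subr_eq0 -normr_eq0; apply/negPn/negP => hd.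
    have d0 : 0 < `|star v - v| by rewrite lt_def hd normr_ge0.
    have [w [[hw _] bw]] := near _ (divr_gt0 d0 (ltr0n _ 2)).
    have h : `|star v - v| <= `|v - w| + `|v - w|.
      by have := ler_distD (star w) (star v) v; rewrite -starB sN hw (distrC w v).
    have h2 : `|v - w| + `|v - w| < `|star v - v|.
      by have := ltrD bw bw; rewrite half2'.
    by have := le_lt_trans h h2; rewrite ltxx.
  split => // phi Sphi.
  have rv := Sreal _ Sphi _ hv.
  case: (boolP (0 <= phi v)) => // hneg.
  have hlt : phi v < 0 by rewrite real_ltNge // real0.
  have hlt0 : 0 < - phi v by rewrite oppr_gt0.
  have [w [[hw pw] bw]] := near _ hlt0.
  have pw0 := pw _ Sphi.
  have rw := ger0_real pw0.
  have h1 : - phi v <= phi w - phi v by rewrite addrC lerDl.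
  have h2 : phi w - phi v <= `|phi w - phi v| by apply: real_ler_norm; rewrite rpredB.
  have h3 : `|phi w - phi v| <= `|v - w|.
    by rewrite -(linB (Slin _ Sphi)) distrC; apply: Sb.
  by have := le_lt_trans (le_trans h1 (le_trans h2 h3)) bw; rewrite ltxx.
- move=> v hv; exists `|v|; split => //; exact: cplus.
- apply/seteqP; split => phi; last first.
    by move=> Sphi; split; [exact: Slin | split; [move=> v [_ pv]; exact: pv | exact: Se]].
  move=> [hl [pos pe]].
  have P1 : forall x, star x = x -> phi x \is Num.real.
    move=> x hx; have px := pos _ (cplus x hx).
    rewrite (linD hl) (linZ hl) pe mulr1 in px.
    have -> : phi x = (phi x + `|x|) - `|x| by rewrite addrK.
    by rewrite rpredB // ?ger0_real // normr_real.
  have P2 : forall h, star h = h -> phi h <= `|h|.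
    move=> h hh; have := pos _ (cminus h hh).
    by rewrite (linB hl) (linZ hl) pe mulr1 subr_ge0.
  have P3 : forall v, phi (star v) = (phi v)^*.
    move=> v; set x := phi v; set y := phi (star v).
    have ha : star (v + star v) = v + star v by rewrite sD sK addrC.
    have hb : star ('i *: (v - star v)) = 'i *: (v - star v).
      by rewrite sZ' starB sK conjCi scaleNr -scalerN opprB.
    have E1 : x^* + y^* = x + y.
      by rewrite -rmorphD -(linD hl); apply/eqP; rewrite -CrealE P1.
    have E2 : - 'i * (x^* - y^*) = 'i * (x - y).
      by rewrite -conjCi -rmorphB -rmorphM -(linB hl) -(linZ hl); apply/eqP; rewrite -CrealE P1.
    have E3 : x^* - y^* + (x - y) = 0.
      have : 'i * (x^* - y^* + (x - y)) = 0 by rewrite mulrDr -E2 mulNr addrN.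
      by move/eqP; rewrite mulf_eq0 (negPf (neq0Ci _)) /= => /eqP.
    apply: (@mulIf _ 2); first by rewrite pnatr_eq0.
    symmetry; transitivity ((x^* + y^*) + (x^* - y^* + (x - y)) - (x - y)); first by ring.
    rewrite E1 E3; ring.
  have P4 : forall v, `|phi v| <= `|v|.
    move=> v; set z := phi v.
    have [->|z0] := eqVneq z 0; first by rewrite normr0 normr_ge0.
    set u := `|z| / z.
    have uz : u * z = `|z| by rewrite /u divfK.
    have nu : `|u| = 1 by rewrite /u normrM normfV normr_id mulfV // normr_eq0.
    set w := u *: v.
    have pw : phi w = `|z| by rewrite /w (linZ hl).
    have nw : `|w| = `|v| by rewrite /w normrZ nu mul1r.
    set h := 2^-1 *: (w + star w).
    have hh : star h = h.
      have c2 : (2^-1 : R[i])^* = 2^-1 by apply: conj_Creal; rewrite rpredV realn.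
      by rewrite /h sZ' c2 sD sK addrC.
    have ph : phi h = `|z|.
      rewrite /h (linZ hl) (linD hl) P3 pw conj_Creal ?normr_real //.
      exact: half2.
    have nh : `|h| <= `|v|.
      rewrite /h normrZ ger0_norm ?invr_ge0 ?ler0n //.
      rewrite -[X in _ <= X]half2 -{1 2}nw -{2}(sN w).
      by apply: ler_wpM2l; [rewrite invr_ge0 ler0n | apply: ler_normD].
    by rewrite -ph; apply: le_trans (P2 _ hh) nh.
  have bf : bounded_functional phi.
    by split => //; exists 1 => v; rewrite mul1r.
  split; last by split => // v; apply: P4.
  split => //; split => // v.
  by rewrite P3; apply/esym/conjCK.
Qed.
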